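(* Let $\phi:F\langle z,y\rangle\to F\langle \alpha,\delta\rangle$ be the homomorphism of free groups with $\phi(z)=\alpha^4\delta^2$ and $\phi(y)=\delta^{-1}\alpha\delta$. Let $w=\dots y^{n_{k-1}}z^{n_k}$ or $w=\dots z^{n_{k-1}}y^{n_k}$ be a reduced word of length $k\ge1$ in alternating nonzero powers of $z$ and $y$ (all $n_i\neq0$). Then: (a) if $w$ ends in a nonzero power of $z$, the reduced form of $\phi(w)$ ends in either $\delta^{-1}\alpha^{-4}$ or $\alpha^4\delta^2$; (b) if $w$ ends in a nonzero power of $y$, the reduced form of $\phi(w)$ ends in $\alpha^n\delta$ for some $n\neq0$. *)

(* Defs.v *)
From mathcomp Require Import all_boot all_algebra.
Set Implicit Arguments. Unset Strict Implicit. Unset Printing Implicit Defensive.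

(* A letter of a free group on two generators: (generator, sign).
   generator false = first generator, true = second generator;
   sign true = the generator itself, false = its inverse.
   Source group F<z,y>:  z = first generator, y = second.
   Target group F<alpha,delta>: alpha = first generator, delta = second. *)
Definition letter := (bool * bool)%type.

Definition inv_letter (x : letter) : letter := (x.1, ~~ x.2).
Definition inv_word (s : seq letter) : seq letter := rev (map inv_letter s).

Definition is_reduced (s : seq letter) : bool :=
  sorted (fun x y => y != inv_letter x) s.

Definition reduce (s : seq letter) : seq letter :=
  foldr (fun x acc => match acc with
                      | y :: t => if y == inv_letter x then t else x :: acc
                      | [::] => [:: x] end) [::] s.

Definition alpha : letter := (false, true).
Definition delta : letter := (true, true).
Definition z_gen : bool := false.
Definition y_gen : bool := true.

Definition apow (n : int) : seq letter :=
  match n with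
  | Posz m => nseq m alpha
  | Negz m => nseq m.+1 (inv_letter alpha)
  end.

Definition phi_gen (g : bool) : seq letter :=
  if g then [:: inv_letter delta; alpha; delta]
  else nseq 4 alpha ++ nseq 2 delta.

Definition phi_letter (x : letter) : seq letter :=
  if x.2 then phi_gen x.1 else inv_word (phi_gen x.1).

Definition phi (w : seq letter) : seq letter :=
  reduce (flatten (map phi_letter w)).

(* Main.v *)
Require Import Defs.
From mathcomp Require Import all_boot all_algebra.
Set Implicit Arguments. Unset Strict Implicit. Unset Printing Implicit Defensive.

Definition push (x : letter) (acc : seq letter) : seq letter :=
  match acc with
  | y :: t => if y == inv_letter x then t else x :: acc
  | [::] => [:: x] end.

Definition rrel := fun x y : letter => y != inv_letter x.

Lemma reduceE s : reduce s = foldr push [::] s.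
Proof. by []. Qed.

Lemma inv_letterK x : inv_letter (inv_letter x) = x.
Proof. by case: x => a b; rewrite /inv_letter /= negbK. Qed.

Lemma push_red x v : is_reduced v -> is_reduced (push x v).
Proof.
case: v => [|y t] //= H.
case: ifP => E; first by move: H; case: t => //= ? ? /andP[].
by rewrite /is_reduced /= E.
Qed.

Lemma foldr_red r s : is_reduced r -> is_reduced (foldr push r s).
Proof. by move=> Hr; elim: s => //= x s IH; apply: push_red. Qed.

Lemma reduce_red s : is_reduced (reduce s).
Proof. by rewrite reduceE; apply: foldr_red. Qed.

Lemma push_cancel x v : is_reduced v -> push x (push (inv_letter x) v) = v.
Proof.
case: v => [|y t] /= H.
  by rewrite eqxx.
case: ifP => E.
  move/eqP: E => E; subst y.
  move: H; rewrite !inv_letterK; case: t => [|u t] //=.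
  rewrite /is_reduced /= => /andP[H _].
  by rewrite (negbTE H).
by rewrite /push eqxx.
Qed.

Lemma foldr_reduce r s : is_reduced r ->
  foldr push r s = foldr push r (reduce s).
Proof.
move=> Hr; elim: s => //= x s IH.
rewrite IH reduceE -/(reduce s).
case E: (reduce s) => [|y u] //=.
case: ifP => //= /eqP ->.
rewrite push_cancel //.
by apply: foldr_red.
Qed.

Lemma reduce_cat s t : reduce (s ++ t) = foldr push (reduce t) s.
Proof. by rewrite reduceE foldr_cat. Qed.

Lemma reduce_reduce_cat s t : reduce (reduce s ++ t) = reduce (s ++ t).
Proof.
rewrite !reduce_cat -foldr_reduce //; exact: reduce_red.
Qed.

Lemma reduce_cancel s x y t : y = inv_letter x ->
  reduce (s ++ x :: y :: t) = reduce (s ++ t).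
Proof.
move=> ->; rewrite !reduce_cat.
have -> : reduce [:: x, inv_letter x & t] = reduce t.
  exact: (push_cancel x (reduce_red t)).
by [].
Qed.

Lemma reduce_id s : is_reduced s -> reduce s = s.
Proof.
elim: s => //= x s IH H.
have Hs : is_reduced s by move: H; case: s {IH} => //= ? ? /andP[].
rewrite reduceE -/(reduce s) IH //.
case: s H {IH Hs} => //= y s /andP[H _].
by rewrite (negbTE H).
Qed.

Lemma red_head p y s s' : is_reduced (p ++ y :: s) -> is_reduced (y :: s') ->
  is_reduced (p ++ y :: s').
Proof.
case: p => //= h p.
rewrite /is_reduced /= !cat_path /= => /andP[-> /andP[-> _]] ->.
by [].
Qed.

Lemma path_nseq x y0 k t : rrel x y0 -> rrel y0 y0 -> path rrel y0 t ->
  path rrel x (nseq k.+1 y0 ++ t).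
Proof.
move=> H1 H2 H3; elim: k x H1 => [|k IH] x H1 /=; first by rewrite H1.
apply/andP; split => //; exact: (IH y0 H2).
Qed.

Definition Inv (c : letter) (s : seq letter) : Prop :=
  match c with
  | (false, true) => exists p, s = p ++ nseq 4 alpha ++ nseq 2 delta
  | (false, false) => exists p, s = p ++ [:: inv_letter delta] ++ nseq 4 (inv_letter alpha)
  | (true, true) => exists p e m, s = p ++ (true, e) :: nseq m.+1 alpha ++ [:: delta]
  | (true, false) => exists p e m,
       s = p ++ (true, e) :: nseq m.+1 (inv_letter alpha) ++ [:: delta]
  end.

Lemma nseq_swap n (a : letter) t : nseq n a ++ a :: t = a :: nseq n a ++ t.
Proof. by elim: n => //= n ->. Qed.

Lemma step_z p x : is_reduced (p ++ nseq 4 alpha ++ nseq 2 delta) ->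
  x != (false, false) ->
  Inv x (reduce ((p ++ nseq 4 alpha ++ nseq 2 delta) ++ phi_letter x)).
Proof.
move=> H; case: x => [[] []] // _ /=.
- exists (p ++ nseq 4 alpha), true, 0.
  have -> : (p ++ nseq 4 alpha ++ nseq 2 delta) ++ phi_letter (true,true)
     = (p ++ [:: alpha; alpha; alpha; alpha; delta]) ++ delta :: (true,false) :: [:: alpha; delta]
    by rewrite -!catA.
  rewrite reduce_cancel // reduce_id; first by rewrite -!catA.
  rewrite -!catA; exact: (red_head H).
- exists (p ++ nseq 4 alpha), true, 0.
  have -> : (p ++ nseq 4 alpha ++ nseq 2 delta) ++ phi_letter (true,false)
     = (p ++ [:: alpha; alpha; alpha; alpha; delta]) ++ delta :: (true,false) :: [:: (false,false); delta]
    by rewrite -!catA.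
  rewrite reduce_cancel // reduce_id; first by rewrite -!catA.
  rewrite -!catA; exact: (red_head H).
- exists (p ++ nseq 4 alpha ++ nseq 2 delta).
  rewrite reduce_id; first by rewrite -!catA.
  rewrite -!catA; exact: (red_head H).
Qed.

Lemma red_blk p e m k (a0 : letter) t : a0.1 = false ->
  is_reduced (p ++ (true,e) :: nseq m.+1 a0 ++ [:: delta]) -> path rrel a0 t ->
  is_reduced (p ++ (true,e) :: nseq k.+1 a0 ++ t).
Proof.
move=> Ha H Ht; apply: (red_head H); rewrite /is_reduced -/rrel.
apply: path_nseq => //; clear H Ht.
- by case: a0 Ha => a b /= ->; case: b; case: e.
- by case: a0 Ha => a b /= ->; case: b.
Qed.

Lemma step_Z p x : is_reduced (p ++ [:: inv_letter delta] ++ nseq 4 (inv_letter alpha)) ->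
  x != (false, true) ->
  Inv x (reduce ((p ++ [:: inv_letter delta] ++ nseq 4 (inv_letter alpha)) ++ phi_letter x)).
Proof.
move=> H; case: x => [[] []] // _ /=.
- exists (p ++ [:: inv_letter delta] ++ nseq 4 (inv_letter alpha)), false, 0.
  rewrite reduce_id; first by rewrite -!catA.
  rewrite -!catA; exact: (red_head H).
- exists (p ++ [:: inv_letter delta] ++ nseq 4 (inv_letter alpha)), false, 0.
  rewrite reduce_id; first by rewrite -!catA.
  rewrite -!catA; exact: (red_head H).
- exists (p ++ [:: inv_letter delta] ++ nseq 4 (inv_letter alpha) ++ [:: inv_letter delta]).
  rewrite reduce_id; first by rewrite -!catA.
  rewrite -!catA; exact: (red_head H).
Qed.

Lemma step_y p e m x :
  is_reduced (p ++ (true, e) :: nseq m.+1 alpha ++ [:: delta]) ->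
  x != (true, false) ->
  Inv x (reduce ((p ++ (true, e) :: nseq m.+1 alpha ++ [:: delta]) ++ phi_letter x)).
Proof.
move=> H; case: x => [[] []] // _ /=.
- exists p, e, m.+1.
  have -> : (p ++ (true, e) :: nseq m.+1 alpha ++ [:: delta]) ++ phi_letter (true,true)
     = (p ++ (true, e) :: nseq m.+1 alpha) ++ delta :: (true,false) :: [:: alpha; delta]
    by rewrite -!catA /= -!catA.
  have E : (p ++ (true, e) :: nseq m.+1 alpha) ++ [:: alpha; delta] =
           p ++ (true, e) :: nseq m.+2 alpha ++ [:: delta].
    by rewrite -catA /= nseq_swap.
  rewrite reduce_cancel // E reduce_id //.
  exact: (red_blk (m := m)).
- exists (p ++ (true, e) :: nseq m.+1 alpha ++ [:: delta]).
  rewrite reduce_id; first by rewrite -!catA.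
  rewrite -!catA /= -!catA.
  exact: (@red_blk p e m m alpha ([:: delta] ++ phi_letter (false,true))).
- exists (p ++ (true, e) :: nseq m.+1 alpha).
  have -> : (p ++ (true, e) :: nseq m.+1 alpha ++ [:: delta]) ++ phi_letter (false,false)
     = (p ++ (true, e) :: nseq m.+1 alpha) ++ delta :: (true,false) ::
         [:: (true,false); (false,false); (false,false); (false,false); (false,false)]
    by rewrite -!catA /= -!catA.
  rewrite reduce_cancel // reduce_id //.
  rewrite -catA /=; exact: (red_blk (m := m)).
Qed.

Lemma step_Y p e m x :
  is_reduced (p ++ (true, e) :: nseq m.+1 (inv_letter alpha) ++ [:: delta]) ->
  x != (true, true) ->
  Inv x (reduce ((p ++ (true, e) :: nseq m.+1 (inv_letter alpha) ++ [:: delta]) ++ phi_letter x)).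
Proof.
move=> H; case: x => [[] []] // _ /=.
- exists p, e, m.+1.
  have -> : (p ++ (true, e) :: nseq m.+1 (inv_letter alpha) ++ [:: delta]) ++ phi_letter (true,false)
     = (p ++ (true, e) :: nseq m.+1 (inv_letter alpha)) ++ delta :: (true,false) :: [:: inv_letter alpha; delta]
    by rewrite -!catA /= -!catA.
  have E : (p ++ (true, e) :: nseq m.+1 (inv_letter alpha)) ++ [:: inv_letter alpha; delta] =
           p ++ (true, e) :: nseq m.+2 (inv_letter alpha) ++ [:: delta].
    by rewrite -catA /= nseq_swap.
  rewrite reduce_cancel // E reduce_id //.
  exact: (red_blk (m := m)).
- exists (p ++ (true, e) :: nseq m.+1 (inv_letter alpha) ++ [:: delta]).
  rewrite reduce_id; first by rewrite -!catA.
  rewrite -!catA /= -!catA.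
  exact: (@red_blk p e m m (inv_letter alpha) ([:: delta] ++ phi_letter (false,true))).
- exists (p ++ (true, e) :: nseq m.+1 (inv_letter alpha)).
  have -> : (p ++ (true, e) :: nseq m.+1 (inv_letter alpha) ++ [:: delta]) ++ phi_letter (false,false)
     = (p ++ (true, e) :: nseq m.+1 (inv_letter alpha)) ++ delta :: (true,false) ::
         [:: (true,false); (false,false); (false,false); (false,false); (false,false)]
    by rewrite -!catA /= -!catA.
  rewrite reduce_cancel // reduce_id //.
  rewrite -catA /=; exact: (red_blk (m := m)).
Qed.

Lemma step c s x : Inv c s -> is_reduced s -> x != inv_letter c ->
  Inv x (reduce (s ++ phi_letter x)).
Proof.
case: c => [[] []] /=.
- by move=> [p [e [m ->]]]; apply: step_y.
- by move=> [p [e [m ->]]]; apply: step_Y.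
- by move=> [p ->]; apply: step_z.
- by move=> [p ->]; apply: step_Z.
Qed.

Lemma inv_all w : w != [::] -> is_reduced w -> Inv (last alpha w) (phi w).
Proof.
elim/last_ind: w => // w' x IH _.
rewrite last_rcons.
case: w' IH => [|y w''] IH.
  move=> _; case: x => [[] []]; rewrite /phi /=.
  - by exists [::], false, 0.
  - by exists [::], false, 0.
  - by exists [::].
  - by exists [:: inv_letter delta].
rewrite /is_reduced /= rcons_path => /andP[Hw Hx].
have Hw' : is_reduced (y :: w'') by [].
have -> : phi (rcons (y :: w'') x) = reduce (phi (y :: w'') ++ phi_letter x).
  rewrite /phi reduce_reduce_cat -cats1 map_cat flatten_cat /= cats0.
  by [].
apply: step; first exact: IH.
- exact: reduce_red.
- move: Hx; rewrite /= /rrel; apply: contra => /eqP ->.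
  by [].
Qed.

Theorem mainTheorem9 (w : seq letter) :
  w != [::] -> is_reduced w ->
  ((last alpha w).1 = z_gen ->
     (exists p, phi w = p ++ [:: inv_letter delta] ++ nseq 4 (inv_letter alpha))
     \/ (exists p, phi w = p ++ nseq 4 alpha ++ nseq 2 delta))
  /\
  ((last alpha w).1 = y_gen ->
     exists n : int, n != 0 /\ exists p, phi w = p ++ apow n ++ [:: delta]).
Proof.
move=> Hne Hr; have := inv_all Hne Hr.
case: (last alpha w) => [[] []] /=.
- move=> [p [e [m E]]]; split => // _.
  exists (Posz m.+1); split => //; exists (p ++ [:: (true, e)]).
  by rewrite E -catA.
- move=> [p [e [m E]]]; split => // _.
  exists (Negz m); split => //; exists (p ++ [:: (true, e)]).
  by rewrite E -catA.
- move=> [p E]; split => // _; by right; exists p.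
- move=> [p E]; split => // _; by left; exists p.
Qed.
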